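(* Let $U\subseteq\mathbb{R}^d$ be an open convex set, let $f$ be a convex function finite on $U$ with $f_U:=\inf_{x'\in U}f(x')$ finite, let $g(\cdot)$ be a deterministic subgradient oracle ($g(x)\in\partial f(x)$ for each $x$), and let $L_0\ge0$, $L_1>0$. Then $$\|g(x)\|^2\le L_0^2+L_1(f(x)-f_U)\qquad\text{for all }x\in U$$ holds if and only if, for each $x\in U$, $$f(y)\le f(x)+\frac{L_1}{4}\|y-x\|^2+\|y-x\|\sqrt{L_1(f(x)-f_U)+L_0^2}\qquad\text{for all }y\in U.$$
   Context: $\partial f(x)=\{g: f(y)\ge f(x)+g^T(y-x)\ \forall y\}$; the oracle returns an arbitrary element of it. *)

(* Defs.v *)
From HB Require Import structures.
From mathcomp Require Import all_boot all_order all_algebra.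
From mathcomp Require Import all_classical all_reals.
Set Implicit Arguments. Unset Strict Implicit. Unset Printing Implicit Defensive.
Import Order.TTheory GRing.Theory Num.Theory.
Local Open Scope ring_scope.
Local Open Scope classical_set_scope.

Definition dotv (R : realType) (d : nat) (u v : 'rV[R]_d) : R :=
  \sum_(i < d) u ord0 i * v ord0 i.

Definition enorm (R : realType) (d : nat) (v : 'rV[R]_d) : R :=
  Num.sqrt (dotv v v).

Definition eopen (R : realType) (d : nat) (U : set 'rV[R]_d) : Prop :=
  forall x, U x -> exists2 e : R, 0 < e &
    forall y, enorm (y - x) < e -> U y.

Definition convex_set (R : realType) (d : nat) (U : set 'rV[R]_d) : Prop :=
  forall x y (t : R), U x -> U y -> 0 <= t -> t <= 1 ->
    U ((1 - t) *: x + t *: y).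

(* f is convex (and finite, being real-valued) on U *)
Definition convex_on (R : realType) (d : nat) (U : set 'rV[R]_d)
    (f : 'rV[R]_d -> R) : Prop :=
  forall x y (t : R), U x -> U y -> 0 <= t -> t <= 1 ->
    f ((1 - t) *: x + t *: y) <= (1 - t) * f x + t * f y.

Definition subdiff (R : realType) (d : nat) (U : set 'rV[R]_d)
    (f : 'rV[R]_d -> R) (x : 'rV[R]_d) : set 'rV[R]_d :=
  [set g | forall y, U y -> f x + dotv g (y - x) <= f y].

Definition finf (R : realType) (d : nat) (U : set 'rV[R]_d)
    (f : 'rV[R]_d -> R) : R := inf (f @` U).

(* Main.v *)
Require Import Defs.
From HB Require Import structures.
From mathcomp Require Import all_boot all_order all_algebra.
From mathcomp Require Import all_classical all_reals.
From mathcomp Require Import ring lra.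
Import Order.TTheory GRing.Theory Num.Theory.
Local Open Scope ring_scope.
Local Open Scope classical_set_scope.
Set Implicit Arguments. Unset Strict Implicit.
Section Dot.
Variables (R : realType) (d : nat).
Implicit Types (u v w : 'rV[R]_d) (a : R).

Lemma dotvC u v : dotv u v = dotv v u.
Proof. by rewrite /dotv; apply: eq_bigr => i _; rewrite mulrC. Qed.

Lemma dotvDl u v w : dotv (u + v) w = dotv u w + dotv v w.
Proof. by rewrite /dotv -big_split; apply: eq_bigr => i _; rewrite !mxE mulrDl. Qed.

Lemma dotvZl a u w : dotv (a *: u) w = a * dotv u w.
Proof. by rewrite /dotv mulr_sumr; apply: eq_bigr => i _; rewrite !mxE mulrA. Qed.

Lemma dotvNl u w : dotv (- u) w = - dotv u w.
Proof. by rewrite -scaleN1r dotvZl mulN1r. Qed.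

Lemma dotvDr u v w : dotv w (u + v) = dotv w u + dotv w v.
Proof. by rewrite dotvC dotvDl !(dotvC w). Qed.

Lemma dotvZr a u w : dotv w (a *: u) = a * dotv w u.
Proof. by rewrite dotvC dotvZl dotvC. Qed.

Lemma dotvNr u w : dotv w (- u) = - dotv w u.
Proof. by rewrite dotvC dotvNl dotvC. Qed.

Lemma dotv_ge0 u : 0 <= dotv u u.
Proof. by apply: sumr_ge0 => i _; rewrite -expr2 sqr_ge0. Qed.

Lemma enorm_ge0 u : 0 <= enorm u.
Proof. exact: sqrtr_ge0. Qed.

Lemma enorm_sqr u : enorm u ^+ 2 = dotv u u.
Proof. by rewrite /enorm sqr_sqrtr // dotv_ge0. Qed.

Lemma enormZ a u : enorm (a *: u) = `|a| * enorm u.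
Proof.
rewrite /enorm dotvZl dotvZr mulrA -expr2 sqrtrM ?sqr_ge0 //.
by rewrite sqrtr_sqr.
Qed.

Lemma enormN u : enorm (- u) = enorm u.
Proof. by rewrite -scaleN1r enormZ normrN normr1 mul1r. Qed.

Lemma dotv_quad u v (t : R) :
  dotv (u - t *: v) (u - t *: v) = dotv u u - 2 * t * dotv u v + t ^+ 2 * dotv v v.
Proof.
rewrite !(dotvDl, dotvDr, dotvNl, dotvNr, dotvZl, dotvZr) (dotvC v u).
ring.
Qed.

Lemma CS u v : dotv u v <= enorm u * enorm v.
Proof.
have q t : 0 <= dotv u u - 2 * t * dotv u v + t ^+ 2 * dotv v v.
  by rewrite -dotv_quad dotv_ge0.
set A := dotv u u in q *; set B := dotv v v in q *; set C := dotv u v in q *.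
have A0 : 0 <= A by exact: dotv_ge0.
have B0 : 0 <= B by exact: dotv_ge0.
have [C0|C0] := lerP C 0.
  by apply: le_trans C0 _; apply: mulr_ge0; apply: enorm_ge0.
have [B0'|B0'] := eqVneq B 0.
  have := q ((A + 1) / (2 * C)); rewrite B0' mulr0 addr0.
  have -> : 2 * ((A + 1) / (2 * C)) * C = A + 1.
    by field; exact: lt0r_neq0.
  lra.
have Bp : 0 < B by rewrite lt_def B0' B0.
have h := q (C / B).
have hC : C ^+ 2 <= A * B.
  have e : A - 2 * (C / B) * C + (C / B) ^+ 2 * B = (A * B - C ^+ 2) / B.
    by field; exact: lt0r_neq0.
  rewrite e in h.
  have := mulr_ge0 h (ltW Bp); rewrite divfK ?lt0r_neq0 //.
  lra.
rewrite /enorm -sqrtrM //.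
rewrite -(ger0_norm (ltW C0)) -sqrtr_sqr ler_sqrt //.
exact: mulr_ge0.
Qed.

End Dot.
Lemma step_ineq (R : realType) (s s' a D : R) : 0 < D -> D <= s -> 0 <= a ->
  0 <= s' -> s' ^+ 2 - s ^+ 2 <= 2 * a * s' -> s' <= s + a + a ^+ 2 / (2 * D).
Proof.
move=> D0 Ds a0 s'0 h.
set b := a ^+ 2 / (2 * D).
have hb : 2 * D * b = a ^+ 2 by rewrite /b; field; lra.
have b0 : 0 <= b by rewrite /b; apply: divr_ge0; [exact: sqr_ge0| lra].
nra.
Qed.

Lemma sqrt_le (R : realType) (x s : R) : 0 <= s -> x <= s ^+ 2 -> Num.sqrt x <= s.
Proof.
move=> s0 h; rewrite -(ger0_norm s0) -sqrtr_sqr ler_sqrt //; exact: sqr_ge0.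
Qed.

Lemma sqrtD_le (R : realType) (a b : R) : 0 <= a -> 0 <= b ->
  Num.sqrt (a + b) <= Num.sqrt a + Num.sqrt b.
Proof.
move=> a0 b0; apply: sqrt_le; first by apply: addr_ge0; exact: sqrtr_ge0.
rewrite sqrrD !sqr_sqrtr //.
have := mulr_ge0 (sqrtr_ge0 a) (sqrtr_ge0 b); lra.
Qed.

Lemma le_sqrt_sq (R : realType) (x s : R) : 0 <= x -> Num.sqrt x <= s -> x <= s ^+ 2.
Proof.
move=> x0 h; rewrite -(sqr_sqrtr x0); have := sqrtr_ge0 x; nra.
Qed.
Lemma bwd (R : realType) (d : nat) (U : set 'rV[R]_d)
    (f : 'rV[R]_d -> R) (g : 'rV[R]_d -> 'rV[R]_d) (L0 L1 fU : R) :
  eopen U -> (forall x, U x -> subdiff U f x (g x)) -> 0 < L1 ->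
  (forall z, U z -> fU <= f z) ->
  (forall x, U x -> forall y, U y ->
     f y <= f x + L1 / 4 * enorm (y - x) ^+ 2
            + enorm (y - x) * Num.sqrt (L1 * (f x - fU) + L0 ^+ 2)) ->
  forall x, U x -> enorm (g x) ^+ 2 <= L0 ^+ 2 + L1 * (f x - fU).
Proof.
move=> oU sg L1p lb H x Ux.
set G := g x; set N := enorm G.
set c := L1 * (f x - fU) + L0 ^+ 2.
have c0 : 0 <= c.
  rewrite /c; apply: addr_ge0; last exact: sqr_ge0.
  apply: mulr_ge0; [lra | have := lb x Ux; lra].
set S := Num.sqrt c.
have S0 : 0 <= S by exact: sqrtr_ge0.
have N0 : 0 <= N by exact: enorm_ge0.
suff NS : N <= S.
  rewrite addrC -/c -(sqr_sqrtr c0) -/S; nra.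
rewrite leNgt; apply/negP => SN.
have Np : 0 < N by lra.
have [e e0 he] := oU x Ux.
set t := Num.min (e / (2 * N)) ((N - S) / (L1 * N)).
have t0 : 0 < t.
  rewrite lt_min; apply/andP; split; apply: divr_gt0; nra.
have t1 : t * (2 * N) <= e.
  by rewrite -ler_pdivlMr ?ge_min ?lexx //; nra.
have t2 : t * (L1 * N) <= N - S.
  by rewrite -ler_pdivlMr ?ge_min ?lexx ?orbT //; nra.
set y := x + t *: G.
have yx : y - x = t *: G by rewrite /y addrC addKr.
have ny : enorm (y - x) = t * N by rewrite yx enormZ ger0_norm //; lra.
have Uy : U y by apply: he; rewrite ny; nra.
have h1 := sg x Ux y Uy; rewrite -/G yx dotvZr -enorm_sqr -/N in h1.
have h2 := H x Ux y Uy; rewrite ny -/c -/S in h2.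
have h3 : t * N ^+ 2 <= L1 / 4 * (t * N) ^+ 2 + t * N * S by lra.
have h4 : 0 < t * N by nra.
have h5 : N <= L1 / 4 * (t * N) + S.
  rewrite -(ler_pM2l h4). nra.
nra.
Qed.
Lemma fwd (R : realType) (d : nat) (U : set 'rV[R]_d)
    (f : 'rV[R]_d -> R) (g : 'rV[R]_d -> 'rV[R]_d) (L0 L1 fU : R) :
  convex_set U -> (forall x, U x -> subdiff U f x (g x)) -> 0 < L1 ->
  (forall z, U z -> fU <= f z) ->
  (forall x, U x -> enorm (g x) ^+ 2 <= L0 ^+ 2 + L1 * (f x - fU)) ->
  forall x, U x -> forall y, U y ->
     f y <= f x + L1 / 4 * enorm (y - x) ^+ 2
            + enorm (y - x) * Num.sqrt (L1 * (f x - fU) + L0 ^+ 2).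
Proof.
move=> cU sg L1p lb H x Ux y Uy.
pose c z := L1 * (f z - fU) + L0 ^+ 2.
have c0 z : U z -> 0 <= c z.
  move=> Uz; rewrite /c; apply: addr_ge0; last exact: sqr_ge0.
  apply: mulr_ge0; [lra | have := lb z Uz; lra].
set r := enorm (y - x).
have r0 : 0 <= r by exact: enorm_ge0.
pose p (n k : nat) := x + (k%:R / n%:R) *: (y - x).
have Up n k : (0 < n)%N -> (k <= n)%N -> U (p n k).
  move=> n0 kn.
  have -> : p n k = (1 - k%:R / n%:R) *: x + (k%:R / n%:R) *: y.
    by rewrite /p scalerBr scalerBl scale1r addrCA addrC.
  have n0' : 0 < n%:R :> R by rewrite ltr0n.
  apply: cU => //; first by apply: divr_ge0.
  by rewrite ler_pdivrMr // mul1r ler_nat.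
have dp n k : p n k.+1 - p n k = (1 / n%:R) *: (y - x).
  rewrite /p opprD addrACA subrr add0r -scalerBl; congr (_ *: _).
  rewrite mulrSr; ring.
have np n k : (0 < n)%N -> enorm (p n k.+1 - p n k) = r / n%:R.
  move=> n0; rewrite dp enormZ ger0_norm; last by apply: divr_ge0.
  by rewrite mul1r mulrC.
have p0 n : p n 0 = x by rewrite /p mul0r scale0r addr0.
have pn n : (0 < n)%N -> p n n = y.
  move=> n0; rewrite /p divff; last by rewrite pnatr_eq0 -lt0n.
  by rewrite scale1r addrC subrK.
have gle z : U z -> enorm (g z) <= Num.sqrt (c z).
  move=> Uz; rewrite -(ger0_norm (enorm_ge0 (g z))) -sqrtr_sqr ler_sqrt ?c0 //.
  by rewrite /c addrC; exact: H.
have key (e : R) : 0 < e -> Num.sqrt (c y + e) <= Num.sqrt (c x + e) + L1 * r / 2.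
  move=> e0.
  set D := Num.sqrt e.
  have D0 : 0 < D by rewrite sqrtr_gt0.
  pose s n k := Num.sqrt (c (p n k) + e).
  have cpe n k : (0 < n)%N -> (k <= n)%N -> 0 <= c (p n k) + e.
    by move=> n0 kn; apply: addr_ge0; [exact: c0 (Up n k n0 kn) | lra].
  have Ds n k : (0 < n)%N -> (k <= n)%N -> D <= s n k.
    move=> n0 kn; rewrite ler_sqrt; last exact: cpe.
    have := c0 _ (Up n k n0 kn); lra.
  pose a (n : nat) := L1 * (r / n%:R) / 2.
  have a0 n : 0 <= a n.
    by rewrite /a; apply: divr_ge0 => //; apply: mulr_ge0; [lra | apply: divr_ge0].
  have stepk n k : (0 < n)%N -> (k < n)%N ->
      s n k.+1 <= s n k + a n + a n ^+ 2 / (2 * D).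
    move=> n0 kn.
    have Uz := Up n k n0 (ltnW kn).
    have Uw := Up n k.+1 n0 kn.
    apply: step_ineq => //; first exact: Ds (ltnW kn).
      exact: sqrtr_ge0.
    rewrite /s !sqr_sqrtr; [|exact: cpe (ltnW kn)|exact: cpe].
    have h1 := sg _ Uw _ Uz.
    have h2 := CS (g (p n k.+1)) (p n k.+1 - p n k).
    rewrite np // in h2.
    have h3 : dotv (g (p n k.+1)) (p n k - p n k.+1) =
              - dotv (g (p n k.+1)) (p n k.+1 - p n k).
      by rewrite -dotvNr opprB.
    rewrite h3 in h1.
    have h4 : enorm (g (p n k.+1)) <= Num.sqrt (c (p n k.+1) + e).
      apply: le_trans (gle _ Uw) _; rewrite ler_sqrt; last exact: cpe.
      lra.
    have rn : 0 <= r / n%:R by apply: divr_ge0.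
    have h5 : f (p n k.+1) - f (p n k) <= r / n%:R * Num.sqrt (c (p n k.+1) + e).
      have := ler_wpM2l rn h4; lra.
    rewrite /c /a.
    have := ler_wpM2l (ltW L1p) h5; lra.
  have ind n k : (0 < n)%N -> (k <= n)%N ->
      s n k <= s n 0 + k%:R * (a n + a n ^+ 2 / (2 * D)).
    move=> n0; elim: k => [|k IH] kn; first by rewrite mul0r addr0.
    have := IH (ltnW kn); have := stepk n k n0 kn; rewrite mulrSr; lra.
  apply/ler_addgt0Pr => eps eps0.
  set K := (L1 * r) ^+ 2 / (8 * D).
  have K0 : 0 <= K by apply: divr_ge0; [exact: sqr_ge0 | lra].
  have KE : 0 <= K / eps by apply: divr_ge0 => //; lra.
  set n := (Num.Def.archi_bound (K / eps)).+1.
  have nK : K / eps < n%:R.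
    apply: lt_le_trans (archi_boundP KE) _; rewrite ler_nat; exact: leqnSn.
  have n0 : (0 < n)%N by [].
  have n0' : 0 < n%:R :> R by rewrite ltr0n.
  have Kn : K / n%:R <= eps.
    rewrite ler_pdivrMr //; rewrite ltr_pdivrMr // in nK; lra.
  have := ind n n n0 (leqnn n).
  rewrite /s pn // p0.
  have -> : n%:R * (a n + a n ^+ 2 / (2 * D)) = L1 * r / 2 + K / n%:R.
    rewrite /a /K; field; apply/andP; split; first exact: lt0r_neq0.
    exact: lt0r_neq0.
  lra.
have S0 : 0 <= Num.sqrt (c x) by exact: sqrtr_ge0.
suff hc : c y <= c x + L1 ^+ 2 * r ^+ 2 / 4 + L1 * r * Num.sqrt (c x).
  rewrite /c in hc.
  have : L1 * (f y - f x) <= L1 * (L1 / 4 * r ^+ 2 + r * Num.sqrt (c x)) by lra.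
  rewrite ler_pM2l // /c; lra.
apply/ler_addgt0Pr => eps eps0.
set e := (eps / (L1 * r + 1)) ^+ 2.
have q0 : 0 < eps / (L1 * r + 1) by apply: divr_gt0 => //; nra.
have e0 : 0 < e by rewrite /e exprn_gt0.
have se : Num.sqrt e = eps / (L1 * r + 1) by rewrite /e sqrtr_sqr ger0_norm // ltW.
have k := key e e0.
have k2 := le_sqrt_sq (addr_ge0 (c0 _ Uy) (ltW e0)) k.
rewrite sqrrD sqr_sqrtr in k2; last by apply: addr_ge0; [exact: c0 | exact: ltW].
have k3 := sqrtD_le (c0 _ Ux) (ltW e0); rewrite se in k3.
have k4 : L1 * r * (eps / (L1 * r + 1)) <= eps.
  have hq : eps / (L1 * r + 1) * (L1 * r + 1) = eps.
    by rewrite divfK // lt0r_neq0 //; nra.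
  nra.
have k5 := ler_wpM2l (mulr_ge0 (ltW L1p) r0) k3.
nra.
Qed.
Unset Implicit Arguments.
Theorem proposition2p6 (R : realType) (d : nat) (U : set 'rV[R]_d)
    (f : 'rV[R]_d -> R) (g : 'rV[R]_d -> 'rV[R]_d) (L0 L1 : R) :
  eopen U -> convex_set U -> convex_on U f ->
  has_inf (f @` U) ->
  (forall x, U x -> subdiff U f x (g x)) ->
  0 <= L0 -> 0 < L1 ->
  (forall x, U x -> enorm (g x) ^+ 2 <= L0 ^+ 2 + L1 * (f x - finf U f)) <->
  (forall x, U x -> forall y, U y ->
     f y <= f x + L1 / 4 * enorm (y - x) ^+ 2
            + enorm (y - x) * Num.sqrt (L1 * (f x - finf U f) + L0 ^+ 2)).
Proof.
move=> oU cU _ hinf sg L00 L1p.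
have lb : forall z, U z -> finf U f <= f z.
  by move=> z Uz; apply: (ge_inf hinf.2); exists z.
split=> H.
  exact: (fwd cU sg L1p lb H).
exact: (bwd oU sg L1p lb H).
Qed.
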